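(* For each of the rules (N1)–(N4), (P1)–(P4) below, if a rule reduces a dynamic implication $\varGamma\Rightarrow\varPhi$ to implications $\varGamma_i\Rightarrow\varPhi_i$ ($1\le i\le n$) and $\varGamma_i\vDash\varPhi_i$ for all $i$, then $\varGamma\vDash\varPhi$. Consequently, if $\varGamma\vdash_{\mathrm{dyn}}\varPhi$ then $\varGamma\vDash\varPhi$.
   Context: Assignments, literals, substitutions ($\sigma(\top)=\top$, $\sigma(\overline l)=\overline{\sigma(l)}$; finite if almost everywhere identity on variables) and $I\circ\sigma$ (with $(I\circ\sigma)(x)=1$ iff $I\vDash\sigma(x)$) as usual. Static constraints form a family with: a constraint for each literal; a negation $\overline C$ ($I\vDash\overline C$ iff $I\not\vDash C$); reducts $C[\sigma]$ ($I\vDash C[\sigma]$ iff $I\circ\sigma\vDash C$); and a conflict-detection predicate $\vdash_\bot F$ on finite sets of static constraints which is sound ($\vdash_\bot F$ implies $F$ unsatisfiable), holds whenever $F$ contains $\bot$ or both $C$ and $\overline C$, and is monotone under supersets. Program items: $\langle\sigma\rangle$ ($J=I\circ\sigma$), $T?$ ($I\vDash T$ and $J=I$), $\varepsilon_1\sqcup\varepsilon_2$ ($I\otimes J\vDash\varepsilon_1$ or $I\otimes J\vDash\varepsilon_2$), $\mathrm{if}\ T\ \mathrm{then}\ \varepsilon_1\parallel\varepsilon_0$ (as $\varepsilon_1$ if $I\vDash T$, as $\varepsilon_0$ otherwise); programs are finite lists of items with sequential composition semantics ($[\,]$ is the empty program). A dynamic constraint $\varepsilon.C$ ($\varepsilon$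 program, $C$ static) holds at $I$ iff $J\vDash C$ whenever $I\otimes J\vDash\varepsilon$; dynamic formulas are finite sets of dynamic constraints interpreted conjunctively. For a program $\delta$: $\delta.(\varepsilon.C)=(\delta\varepsilon).C$ and $\delta.\varGamma=\{\delta.\varPhi:\varPhi\in\varGamma\}$. A static constraint $T$ is identified with $[\,].T$. For a dynamic constraint $\varPhi$ and finite substitution $\sigma$, $\varPhi[\sigma]$ denotes its reduct, a dynamic constraint satisfying $I\vDash\varPhi[\sigma]$ iff $I\circ\sigma\vDash\varPhi$ for all $I$, with $([\,].C)[\sigma]=[\,].C[\sigma]$; $\varDelta[\sigma]=\{\varPhi[\sigma]:\varPhi\in\varDelta\}$. A dynamic implication $\varGamma\Rightarrow\varPhi$ has $\varGamma$ a dynamic formula and $\varPhi$ a dynamic constraint. Rules ($\varGamma,\varDelta$ dynamic formulas, $\varPhi$ dynamic constraint, $T$ static, $\varepsilon_i$ programs): (N1) $\varGamma\Rightarrow\langle\sigma\rangle.\varPhi$ reduces to $\varGamma\Rightarrow\varPhi[\sigma]$; (N2) $\varGamma\Rightarrow(\varepsilon_1\sqcup\varepsilon_2).\varPhi$ reduces to $\varGamma\Rightarrow\varepsilon_1.\varPhi$ and $\varGamma\Rightarrow\varepsilon_2.\varPhi$; (N3) $\varGamma\Rightarrow T?.\varPhi$ reduces to $\varGamma\cup\{T\}\Rightarrow\varPhi$; (N4) $\varGamma\Rightarrow(\mathrm{if}\ T\ \mathrm{then}\ \varepsilon_1\parallel\varepsilon_0).\varPhi$ reduces to $\varGamma\cup\{T\}\Rightarrow\varepsilon_1.\varPhi$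 and $\varGamma\cup\{\overline T\}\Rightarrow\varepsilon_0.\varPhi$; (P1) $\varGamma\cup\langle\sigma\rangle.\varDelta\Rightarrow\varPhi$ reduces to $\varGamma\cup\varDelta[\sigma]\Rightarrow\varPhi$; (P2) $\varGamma\cup(\varepsilon_1\sqcup\varepsilon_2).\varDelta\Rightarrow\varPhi$ reduces to $\varGamma\cup\varepsilon_1.\varDelta\cup\varepsilon_2.\varDelta\Rightarrow\varPhi$; (P3) $\varGamma\cup T?.\varDelta\Rightarrow\varPhi$ reduces to $\varGamma\cup\varDelta\cup\{T\}\Rightarrow\varPhi$ and $\varGamma\cup\{\overline T\}\Rightarrow\varPhi$; (P4) $\varGamma\cup(\mathrm{if}\ T\ \mathrm{then}\ \varepsilon_1\parallel\varepsilon_0).\varDelta\Rightarrow\varPhi$ reduces to $\varGamma\cup\varepsilon_1.\varDelta\cup\{T\}\Rightarrow\varPhi$ and $\varGamma\cup\varepsilon_0.\varDelta\cup\{\overline T\}\Rightarrow\varPhi$. We write $\varGamma\vdash_{\mathrm{dyn}}\varPhi$ if, by finitely many applications of these rules, $\varGamma\Rightarrow\varPhi$ can be reduced to implications $[\,].F_i\Rightarrow[\,].C_i$ ($1\le i\le n$) with all constraints having empty context ($F_i$ static formulas, $C_i$ static constraints) such that $\vdash_\bot F_i\cup\{\overline{C_i}\}$ for every $i$. *)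

(* Defs.v *)
From Stdlib Require Import List.
Import ListNotations.
Set Implicit Arguments.

Inductive lit (V : Type) : Type :=
| LTop : lit V
| LBot : lit V
| LPos : V -> lit V
| LNeg : V -> lit V.
Arguments LTop {V}. Arguments LBot {V}.

Definition lneg {V} (l : lit V) : lit V :=
  match l with LTop => LBot | LBot => LTop | LPos x => LNeg x | LNeg x => LPos x end.

Definition assn (V : Type) := V -> bool.

Definition lsat {V} (I : assn V) (l : lit V) : bool :=
  match l with LTop => true | LBot => false | LPos x => I x | LNeg x => negb (I x) end.

Record fsubst (V : Type) := {
  fs_map :> V -> lit V;
  fs_fin : exists dom : list V, forall x, ~ In x dom -> fs_map x = LPos x }.

Definition lsubst {V} (s : fsubst V) (l : lit V) : lit V :=
  match l with LTop => LTop | LBot => LBot | LPos x => s x | LNeg x => lneg (s x) end.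

Definition comp {V} (I : assn V) (s : fsubst V) : assn V := fun x => lsat I (s x).

(** * Abstract family of static constraints (with conflict detection).
    Finite sets of static constraints are represented as lists. *)
Record StaticFamily (V : Type) := {
  sc :> Type;
  ssat : assn V -> sc -> Prop;
  sclit : lit V -> sc;
  sclit_sat : forall I l, ssat I (sclit l) <-> lsat I l = true;
  scneg : sc -> sc;
  scneg_sat : forall I C, ssat I (scneg C) <-> ~ ssat I C;
  scred : sc -> fsubst V -> sc;
  scred_sat : forall I C s, ssat I (scred C s) <-> ssat (comp I s) C;
  conflict : list sc -> Prop;
  conflict_sound : forall F, conflict F -> ~ exists I, forall C, In C F -> ssat I C;
  conflict_bot : forall F, In (sclit LBot) F -> conflict F;
  conflict_compl : forall F C, In C F -> In (scneg C) F -> conflict F;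
  conflict_mono : forall F G, incl F G -> conflict F -> conflict G }.

Arguments ssat {V} s0 _ _.
Arguments scneg {V} s0 _.
Arguments scred {V} s0 _ _.
Arguments conflict {V} s0 _.

Section Dyn.
Variables (V : Type) (S : StaticFamily V).

Inductive item : Type :=
| ISub : fsubst V -> item
| ITest : S -> item
| IChoice : list item -> list item -> item
| IIf : S -> list item -> list item -> item.

Definition prog := list item.

Inductive exec_item : item -> assn V -> assn V -> Prop :=
| ExSub s I : exec_item (ISub s) I (comp I s)
| ExTest T I : ssat S I T -> exec_item (ITest T) I I
| ExChoiceL e1 e2 I J : exec e1 I J -> exec_item (IChoice e1 e2) I J
| ExChoiceR e1 e2 I J : exec e2 I J -> exec_item (IChoice e1 e2) I J
| ExIfT T e1 e0 I J : ssat S I T -> exec e1 I J -> exec_item (IIf T e1 e0) I J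
| ExIfF T e1 e0 I J : ~ ssat S I T -> exec e0 I J -> exec_item (IIf T e1 e0) I J
with exec : prog -> assn V -> assn V -> Prop :=
| ExNil I : exec [] I I
| ExCons it p I K J : exec_item it I K -> exec p K J -> exec (it :: p) I J.

Definition dcon := (prog * S)%type.
Definition dform := list dcon.

Definition dsat (I : assn V) (Phi : dcon) : Prop :=
  forall J, exec (fst Phi) I J -> ssat S J (snd Phi).

Definition dfsat (I : assn V) (G : dform) : Prop := forall Phi, In Phi G -> dsat I Phi.

Definition dentails (G : dform) (Phi : dcon) : Prop :=
  forall I, dfsat I G -> dsat I Phi.

Definition dpre (d : prog) (Phi : dcon) : dcon := (d ++ fst Phi, snd Phi).
Definition dpres (d : prog) (G : dform) : dform := map (dpre d) G.

Definition st (T : S) : dcon := ([], T).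

(** reduct of dynamic constraints: any operation with the stated properties *)
Record DynReduct := {
  dred : dcon -> fsubst V -> dcon;
  dred_sat : forall I Phi s, dsat I (dred Phi s) <-> dsat (comp I s) Phi;
  dred_empty : forall C s, dred ([], C) s = ([], scred S C s) }.

Variable R : DynReduct.

Definition dreds (G : dform) (s : fsubst V) : dform := map (fun Phi => dred R Phi s) G.

Definition same_set (G1 G2 : dform) : Prop := forall Phi, In Phi G1 <-> In Phi G2.

Definition dimpl := (dform * dcon)%type.

(** reduces c L : a single rule application reduces c to the implications in L.
    In the (P) rules the antecedent Gamma u delta.Delta is matched up to set equality. *)
Inductive reduces : dimpl -> list dimpl -> Prop :=
| N1 G s eps C :
    reduces (G, (ISub s :: eps, C)) [(G, dred R (eps, C) s)]
| N2 G e1 e2 eps C :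
    reduces (G, (IChoice e1 e2 :: eps, C)) [(G, (e1 ++ eps, C)); (G, (e2 ++ eps, C))]
| N3 G T eps C :
    reduces (G, (ITest T :: eps, C)) [(G ++ [st T], (eps, C))]
| N4 G T e1 e0 eps C :
    reduces (G, (IIf T e1 e0 :: eps, C))
      [(G ++ [st T], (e1 ++ eps, C)); (G ++ [st (scneg S T)], (e0 ++ eps, C))]
| P1 G0 G D s Phi :
    same_set G0 (G ++ dpres [ISub s] D) ->
    reduces (G0, Phi) [(G ++ dreds D s, Phi)]
| P2 G0 G D e1 e2 Phi :
    same_set G0 (G ++ dpres [IChoice e1 e2] D) ->
    reduces (G0, Phi) [(G ++ dpres e1 D ++ dpres e2 D, Phi)]
| P3 G0 G D T Phi :
    same_set G0 (G ++ dpres [ITest T] D) ->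
    reduces (G0, Phi) [(G ++ D ++ [st T], Phi); (G ++ [st (scneg S T)], Phi)]
| P4 G0 G D T e1 e0 Phi :
    same_set G0 (G ++ dpres [IIf T e1 e0] D) ->
    reduces (G0, Phi)
      [(G ++ dpres e1 D ++ [st T], Phi); (G ++ dpres e0 D ++ [st (scneg S T)], Phi)].

Inductive dyn_derivable : dimpl -> Prop :=
| DLeaf G C :
    (forall Phi, In Phi G -> fst Phi = []) ->
    conflict S (map snd G ++ [scneg S C]) ->
    dyn_derivable (G, ([], C))
| DStep c L :
    reduces c L -> (forall p, In p L -> dyn_derivable p) -> dyn_derivable c.

End Dyn.

(* Main.v *)
Require Import Defs.
From Stdlib Require Import List Classical.
Import ListNotations.
Set Implicit Arguments.

Section Proofs.
Variables (V : Type) (S : StaticFamily V).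

Lemma exec_nil_inv (I J : assn V) : exec (S:=S) [] I J -> J = I.
Proof. intro H; inversion H; auto. Qed.

Lemma exec_app (p q : prog S) I J :
  exec (p ++ q) I J <-> exists K, exec p I K /\ exec q K J.
Proof.
  revert I; induction p as [|it p IH]; intro I; simpl; split.
  - intro H; exists I; split; [constructor|exact H].
  - intros [K [H1 H2]]; apply exec_nil_inv in H1; subst; exact H2.
  - intro H; inversion H; subst.
    apply IH in H5; destruct H5 as [K' [H5 H6]].
    exists K'; split; [econstructor; eauto | exact H6].
  - intros [K [H1 H2]]; inversion H1; subst.
    econstructor; [eauto|]; apply IH; eauto.
Qed.

Lemma dsat_cons it (eps : prog S) C I :
  dsat I (it :: eps, C) <-> forall K, exec_item it I K -> dsat K (eps, C).
Proof.
  unfold dsat; simpl; split.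
  - intros H K HK J HJ; apply H; econstructor; eauto.
  - intros H J HJ; inversion HJ; subst; eapply H; eauto.
Qed.

Lemma dsat_app (e eps : prog S) C I :
  dsat I (e ++ eps, C) <-> forall K, exec e I K -> dsat K (eps, C).
Proof.
  unfold dsat; simpl; split.
  - intros H K HK J HJ; apply H; apply exec_app; eauto.
  - intros H J HJ; apply exec_app in HJ; destruct HJ as [K [H1 H2]]; eapply H; eauto.
Qed.

Lemma dsat_st I (T : S) : dsat I (st S T) <-> ssat S I T.
Proof.
  unfold dsat, st; simpl; split.
  - intro H; apply H; constructor.
  - intros H J HJ; apply exec_nil_inv in HJ; subst; exact H.
Qed.

Lemma dfsat_app I (G1 G2 : dform S) : dfsat I (G1 ++ G2) <-> dfsat I G1 /\ dfsat I G2.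
Proof.
  unfold dfsat; split.
  - intro H; split; intros; apply H; apply in_or_app; auto.
  - intros [H1 H2] Phi HP; apply in_app_or in HP; destruct HP; auto.
Qed.

Lemma dfsat_same I (G0 G : dform S) : same_set G0 G -> dfsat I G0 -> dfsat I G.
Proof. unfold same_set, dfsat; intros H H0 Phi HP; apply H0, H, HP. Qed.

Lemma dfsat_map I (f : dcon S -> dcon S) (D : dform S) :
  (forall Phi, In Phi D -> dsat I (f Phi)) -> dfsat I (map f D).
Proof. unfold dfsat; intros H Phi HP; apply in_map_iff in HP; destruct HP as [x [<- Hx]]; auto. Qed.

Lemma dfsat_dpres1 I it (D : dform S) Phi :
  dfsat I (dpres [it] D) -> In Phi D ->
  forall K, exec_item it I K -> dsat K Phi.
Proof.
  intros H HP K HK.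
  assert (H1 : dsat I (dpre [it] Phi)) by (apply H; apply in_map; auto).
  destruct Phi as [p C]; unfold dpre in H1; simpl in H1.
  exact (proj1 (dsat_cons it p C I) H1 K HK).
Qed.

End Proofs.

Theorem mainTheorem4 (V : Type) (S : StaticFamily V) (R : DynReduct S) :
  (forall (G : dform S) (Phi : dcon S) (L : list (dimpl S)),
      reduces R (G, Phi) L ->
      (forall Gi Phii, In (Gi, Phii) L -> dentails Gi Phii) ->
      dentails G Phi)
  /\
  (forall (G : dform S) (Phi : dcon S),
      dyn_derivable R (G, Phi) -> dentails G Phi).
Proof.
  assert (A : forall (G : dform S) (Phi : dcon S) (L : list (dimpl S)),
      reduces R (G, Phi) L ->
      (forall Gi Phii, In (Gi, Phii) L -> dentails Gi Phii) ->
      dentails G Phi).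
  { intros G Phi L Hr HL I HI.
    inversion Hr; subst.
    -
      apply dsat_cons; intros K HK; inversion HK; subst.
      apply (dred_sat R). apply (HL G); simpl; auto.
    -
      apply dsat_cons; intros K HK; inversion HK; subst.
      + apply (dsat_app e1 eps C I); [apply (HL G); simpl; auto | auto].
      + apply (dsat_app e2 eps C I); [apply (HL G); simpl; auto | auto].
    -
      apply dsat_cons; intros K HK; inversion HK; subst.
      apply (HL (G ++ [st S T])); simpl; auto.
      apply dfsat_app; split; auto.
      intros P [<-|[]]; apply dsat_st; auto.
    -
      apply dsat_cons; intros K HK; inversion HK; subst.
      + apply (dsat_app e1 eps C I); [|auto].
        apply (HL (G ++ [st S T])); simpl; auto.
        apply dfsat_app; split; auto.
        intros P [<-|[]]; apply dsat_st; auto.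
      + apply (dsat_app e0 eps C I); [|auto].
        apply (HL (G ++ [st S (scneg S T)])); simpl; auto.
        apply dfsat_app; split; auto.
        intros P [<-|[]]; apply dsat_st; apply scneg_sat; auto.
    -
      match goal with Hs : same_set _ _ |- _ => rename Hs into H3 end.
      apply (dfsat_same H3) in HI; apply dfsat_app in HI as [H1 H2].
      apply (HL (G1 ++ dreds R D s)); simpl; auto.
      apply dfsat_app; split; auto.
      apply dfsat_map; intros P HP; apply (dred_sat R).
      eapply dfsat_dpres1; eauto; constructor.
    -
      match goal with Hs : same_set _ _ |- _ => rename Hs into H3 end.
      apply (dfsat_same H3) in HI; apply dfsat_app in HI as [H1 H2].
      apply (HL (G1 ++ dpres e1 D ++ dpres e2 D)); simpl; auto.
      apply dfsat_app; split; auto; apply dfsat_app; split;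
        apply dfsat_map; intros [p C] HP; unfold dpre; simpl;
        apply dsat_app; intros K HK;
        eapply dfsat_dpres1; eauto; [apply ExChoiceL | apply ExChoiceR]; auto.
    -
      match goal with Hs : same_set _ _ |- _ => rename Hs into H3 end.
      apply (dfsat_same H3) in HI; apply dfsat_app in HI as [H1 H2].
      destruct (classic (ssat S I T)) as [HT|HT].
      + apply (HL (G1 ++ D ++ [st S T])); simpl; auto.
        apply dfsat_app; split; auto; apply dfsat_app; split.
        * intros P HP; eapply dfsat_dpres1; eauto; constructor; auto.
        * intros P [<-|[]]; apply dsat_st; auto.
      + apply (HL (G1 ++ [st S (scneg S T)])); simpl; auto.
        apply dfsat_app; split; auto.
        intros P [<-|[]]; apply dsat_st; apply scneg_sat; auto.
    -
      match goal with Hs : same_set _ _ |- _ => rename Hs into H3 end.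
      apply (dfsat_same H3) in HI; apply dfsat_app in HI as [H1 H2].
      destruct (classic (ssat S I T)) as [HT|HT].
      + apply (HL (G1 ++ dpres e1 D ++ [st S T])); simpl; auto.
        apply dfsat_app; split; auto; apply dfsat_app; split.
        * apply dfsat_map; intros [p C] HP; unfold dpre; simpl;
          apply dsat_app; intros K HK;
          eapply dfsat_dpres1; eauto; apply ExIfT; auto.
        * intros P [<-|[]]; apply dsat_st; auto.
      + apply (HL (G1 ++ dpres e0 D ++ [st S (scneg S T)])); simpl; auto.
        apply dfsat_app; split; auto; apply dfsat_app; split.
        * apply dfsat_map; intros [p C] HP; unfold dpre; simpl;
          apply dsat_app; intros K HK;
          eapply dfsat_dpres1; eauto; apply ExIfF; auto.
        * intros P [<-|[]]; apply dsat_st; apply scneg_sat; auto. }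
  split; [exact A|].
  assert (B : forall c, dyn_derivable R c -> dentails (fst c) (snd c)).
  { intros c H; induction H as [G C HG Hc | c L Hr HL IH].
    - intros I HI J HJ; simpl in HJ; apply exec_nil_inv in HJ; subst; simpl.
      apply NNPP; intro Hn.
      apply (conflict_sound S _ Hc); exists I; intros C' HC'.
      apply in_app_or in HC'; destruct HC' as [HC'|[<-|[]]].
      + apply in_map_iff in HC'; destruct HC' as [[p D] [<- HD]]; simpl.
        specialize (HG _ HD); simpl in HG; subst.
        apply (HI _ HD); constructor.
      + apply scneg_sat; auto.
    - destruct c as [G Phi]; simpl.
      apply (A G Phi L Hr); intros Gi Phii Hi; apply (IH _ Hi). }
  intros G Phi H; apply (B _ H).
Qed.
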